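(* Let $n\ge2$ and $H>1$. There is a constant $c(n,H)$, depending only on $n$ and $H$, with the following property. For every $\mu>0$, let $\varphi$ be the profile function of the hyperbolic Delaunay unduloid $\mathcal{D}_H(\mu)$ and let $V$ be the potential of its stability operator. Then $V\tan^2\varphi\le c(n,H)$ everywhere on $\mathcal{D}_H(\mu)$.
   Context: Use the upper half-space model of $\mathbb{H}^{n+1}$. For $\mu>0$ and $H>1$, let $\varphi:\mathbb{R}\to(0,\pi/2)$ be a solution of $$\mu=\frac{(\tan\varphi)^{n-1}}{\cos\varphi\sqrt{1+\varphi'^2}}-H(\tan\varphi)^n.$$ The hyperbolic Delaunay unduloid $\mathcal{D}_H(\mu)$ is parametrized by $\Phi(t,\omega)=(e^t\sin\varphi(t)\omega,e^t\cos\varphi(t))$, $\omega\in S^{n-1}$. It has constant (normalized) mean curvature $H$. Its stability operator is $L=\Delta-V$, where $\Delta$ is the non-negative Laplacian and $V=\|B\|^2-n$. Here $\|B\|$ is the norm of the second fundamental form, and $V\circ\Phi = n(H^2-1)+n(n-1)\mu^2(\tan\varphi)^{-2n}$. *)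

(* Defs.v *)
From Stdlib Require Import Reals Lra Lia.
From Coquelicot Require Import Coquelicot.
Open Scope R_scope.

Definition delaunay_profile (n : nat) (H mu : R) (phi : R -> R) : Prop :=
  (forall t, 0 < phi t < PI / 2) /\
  (forall t, ex_derive phi t) /\
  (forall t, mu = tan (phi t) ^ (n - 1)
                   / (cos (phi t) * sqrt (1 + (Derive phi t) ^ 2))
                  - H * tan (phi t) ^ n).

(* The potential V = ||B||^2 - n of the stability operator, evaluated at
   Phi(t, omega) (it does not depend on omega):
     V o Phi = n (H^2 - 1) + n (n-1) mu^2 (tan phi)^(-2n). *)
Definition stability_potential (n : nat) (H mu : R) (phi : R -> R) (t : R) : R :=
  INR n * (H ^ 2 - 1) + INR n * (INR n - 1) * mu ^ 2 / tan (phi t) ^ (2 * n).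

(* Main.v *)
Require Import Defs.
From Stdlib Require Import Reals.
From Stdlib Require Import Lra Lia Psatz.
From Coquelicot Require Import Coquelicot.
Open Scope R_scope.

Theorem lemma3p4 (n : nat) (H : R) (hn : (2 <= n)%nat) (hH : 1 < H) :
  exists c : R,
    forall (mu : R) (phi : R -> R),
      0 < mu ->
      delaunay_profile n H mu phi ->
      forall t : R, stability_potential n H mu phi t * tan (phi t) ^ 2 <= c.
Proof.
  set (KK := INR n).
  assert (hK : 2 <= KK) by (unfold KK; replace 2 with (INR 2) by (simpl; lra); apply le_INR; lia).
  exists (KK + KK * (KK - 1) * (1 + 1 / (H^2 - 1))).
  intros mu phi hmu [hr [_ hode]] t.
  specialize (hr t); specialize (hode t).
  unfold stability_potential; fold KK.
  set (D := Derive phi t) in hode.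
  set (p := phi t) in hr, hode |- *.
  assert (hc : 0 < cos p) by (apply cos_gt_0; lra).
  assert (hs : 0 < sin p) by (apply sin_gt_0; pose proof PI_RGT_0; lra).
  assert (hpy := sin2_cos2 p).
  set (x := tan p) in hode |- *.
  assert (hx : x = sin p / cos p) by reflexivity.
  assert (hx0 : 0 < x) by (rewrite hx; apply Rdiv_lt_0_compat; auto).
  assert (hxc : (1 + x^2) * (cos p)^2 = 1).
  { rewrite hx. unfold Rsqr in hpy. field_simplify; [|lra]. lra. }
  assert (hS : 1 <= sqrt (1 + D^2)).
  { rewrite <- sqrt_1 at 1. apply sqrt_le_1_alt. pose proof (pow2_ge_0 D); lra. }
  set (s := sqrt (1 + D^2)) in hode, hS.
  set (y := x ^ (n - 1)) in hode.
  assert (hy : 0 < y) by (apply pow_lt; auto).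
  assert (hxn : x ^ n = x * y).
  { unfold y. replace n with (S (n-1)) at 1 by lia. reflexivity. }
  assert (hx2n : x ^ (2 * n) = x^2 * y^2).
  { unfold y. rewrite <- pow_mult, <- pow_add. f_equal. lia. }
  rewrite hxn in hode. rewrite hx2n.
  set (m := mu / y).
  assert (hm : 0 < m) by (apply Rdiv_lt_0_compat; auto).
  assert (hmu' : mu = m * y) by (unfold m; field; lra).
  assert (hb : m + H * x <= 1 / cos p).
  { assert (e : m + H * x = 1 / (cos p * s)).
    { apply (Rmult_eq_reg_r y); [|lra]. rewrite Rmult_plus_distr_r.
      rewrite <- hmu'. rewrite hode. field. split; lra. }
    rewrite e. apply Rmult_le_compat_l; [lra|].
    apply Rinv_le_contravar; [auto|]. nra. }
  assert (hb2 : (m + H * x)^2 <= 1 + x^2).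
  { assert (0 <= m + H*x) by nra.
    assert ((m + H*x)^2 <= (1/cos p)^2) by (apply pow_incr; auto).
    replace (1 + x^2) with ((1 / cos p)^2); [auto|].
    field_simplify; [|lra]. apply (Rmult_eq_reg_r ((cos p)^2)); [|nra].
    field_simplify; lra. }
  assert (hHx : 0 < H * x) by (apply Rmult_lt_0_compat; lra).
  assert (hexp : (m + H*x)^2 = m^2 + 2*m*(H*x) + (H*x)^2) by ring.
  assert (0 < m * (H*x)) by (apply Rmult_lt_0_compat; lra).
  assert (0 <= m^2) by apply pow2_ge_0.
  assert (0 <= (H*x)^2) by apply pow2_ge_0.
  assert (hxb : (H^2 - 1) * x^2 <= 1).
  { replace ((H^2 - 1) * x^2) with ((H*x)^2 - x^2) by ring. lra. }
  assert (hmb : m^2 <= 1 + x^2) by lra.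
  assert (hH2 : 0 < H^2 - 1) by nra.
  assert (hxb' : x^2 <= 1 / (H^2-1)).
  { apply (Rmult_le_reg_r (H^2-1)); auto. field_simplify; lra. }
  replace (KK * (H ^ 2 - 1) + KK * (KK - 1) * mu ^ 2 / (x ^ 2 * y ^ 2)) with
    (KK * (H ^ 2 - 1) + KK * (KK - 1) * m ^ 2 / x ^ 2)
    by (rewrite hmu'; field; split; lra).
  replace ((KK * (H ^ 2 - 1) + KK * (KK - 1) * m ^ 2 / x ^ 2) * x ^ 2) with
    (KK * ((H ^ 2 - 1) * x^2) + KK * (KK - 1) * m ^ 2) by (field; lra).
  assert (0 <= KK * (KK-1)) by nra.
  assert (KK * (KK-1) * m^2 <= KK * (KK-1) * (1 + 1/(H^2-1))) by
    (apply Rmult_le_compat_l; lra).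
  nra.
Qed.
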